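(* With the notation $\epsilon\in(0,4)$, $\mathcal{H}_\epsilon=\ell^2(\epsilon+4\mathbb{Z})$, $B(v)=\tfrac{27}{8}|v|\,\big||v+1|^{1/3}-|v-1|^{1/3}\big|^3$, $\tilde A(v)=|v|\,\big||v+1|-|v-1|\big|$, $(D\psi)(v)=\psi(v+2)-\psi(v-2)$ and $\hat\rho_2=-\tfrac{\rho_c}{8}B(\hat v)^{1/2}D\,\tilde A(\hat v)\,D\,B(\hat v)^{1/2}$: if $\psi\in\mathcal{H}_\epsilon$ is a normalizable eigenvector of $\hat\rho_2$ with eigenvalue $\lambda>\rho_c$, then $\psi$ decays exponentially, i.e. there exist $C,\kappa>0$ (with $\kappa$ depending only on $\lambda$ and increasing with $\lambda$) such that $|\psi(v)|\le C e^{-\kappa|v|}$ for all $v\in\epsilon+4\mathbb{Z}$. For $0\le\lambda<\rho_c$, by contrast, every solution of the eigenvalue equation is asymptotically, for large $|v|$, a bounded superposition of oscillating exponentials $\alpha e^{ikv}+\alpha' e^{-ikv}$ plus a bounded remainder decaying like $1/|v|$, where $k\in\mathbb{R}$ is determined by $\lambda$. *)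

(* Defs.v *)
From Stdlib Require Import Reals Lra ZArith.
Open Scope R_scope.

Definition Cx : Type := (R * R)%type.
Definition C0 : Cx := (0, 0).
Definition Cadd (z w : Cx) : Cx := (fst z + fst w, snd z + snd w).
Definition Csub (z w : Cx) : Cx := (fst z - fst w, snd z - snd w).
Definition Cmul (z w : Cx) : Cx :=
  (fst z * fst w - snd z * snd w, fst z * snd w + snd z * fst w).
Definition Cscale (r : R) (z : Cx) : Cx := (r * fst z, r * snd z).
Definition Cmod (z : Cx) : R := sqrt (fst z ^ 2 + snd z ^ 2).
Definition Cexpi (t : R) : Cx := (cos t, sin t).

(* |x|^{1/3}, with 0^{1/3} = 0 (Rpower 0 y is 1 in Stdlib, hence the case split) *)
Definition cbrt_abs (x : R) : R :=
  match Rlt_dec 0 (Rabs x) with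
  | left _ => Rpower (Rabs x) (1/3)
  | right _ => 0
  end.

Definition Bfun (v : R) : R :=
  27/8 * Rabs v * (Rabs (cbrt_abs (v + 1) - cbrt_abs (v - 1))) ^ 3.

Definition Atil (v : R) : R := Rabs v * Rabs (Rabs (v + 1) - Rabs (v - 1)).

Definition Dop (f : R -> Cx) (v : R) : Cx := Csub (f (v + 2)) (f (v - 2)).

(* rho_2 = -(rho_c/8) B^{1/2} D A~ D B^{1/2}, acting on functions of v;
   only the values of psi on the lattice eps+4Z matter when evaluated on it. *)
Definition rho2 (rc : R) (psi : R -> Cx) (v : R) : Cx :=
  Cscale (- (rc / 8) * sqrt (Bfun v))
    (Dop (fun w => Cscale (Atil w)
            (Dop (fun u => Cscale (sqrt (Bfun u)) (psi u)) w)) v).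

Definition vpt (eps : R) (n : Z) : R := eps + 4 * IZR n.

Definition eigen_eq (rc eps lam : R) (psi : R -> Cx) : Prop :=
  forall n : Z, rho2 rc psi (vpt eps n) = Cscale lam (psi (vpt eps n)).

(* psi restricted to eps+4Z lies in l^2(eps+4Z): the symmetric partial sums
   sum_{|n|<=N} |psi(eps+4n)|^2 are bounded (nonnegative terms). *)
Definition in_l2 (eps : R) (psi : R -> Cx) : Prop :=
  exists M : R, forall N : nat,
    sum_f_R0 (fun j => Cmod (psi (vpt eps (Z.of_nat j - Z.of_nat N)%Z)) ^ 2)
      (2 * N) <= M.

Definition nonzero_on (eps : R) (psi : R -> Cx) : Prop :=
  exists n : Z, psi (vpt eps n) <> C0.

(* Main.v *)
Require Import Defs.
From Stdlib Require Import Reals ZArith Lra Lia Psatz.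
From Coquelicot Require Complex.
Open Scope R_scope.

Lemma cbrt_pos_cube (x : R) : 0 < x -> 0 < cbrt_abs x /\ cbrt_abs x ^ 3 = x.
Proof.
  intro hx. unfold cbrt_abs. rewrite (Rabs_right x) by lra.
  destruct (Rlt_dec 0 x) as [h|h]; [|lra].
  split. unfold Rpower. apply exp_pos.
  rewrite <- Rpower_pow by (unfold Rpower; apply exp_pos).
  rewrite Rpower_mult. replace (1/3 * INR 3) with 1 by (simpl; field).
  apply Rpower_1; auto.
Qed.

Lemma Bfun_even (v : R) : Bfun (- v) = Bfun v.
Proof.
  unfold Bfun. rewrite Rabs_Ropp.
  replace (-v+1) with (-(v-1)) by ring. replace (-v-1) with (-(v+1)) by ring.
  unfold cbrt_abs. rewrite !Rabs_Ropp.
  replace (Rabs (_ - _)) with (Rabs ((match Rlt_dec 0 (Rabs (v + 1)) with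
   | left _ => Rpower (Rabs (v + 1)) (1 / 3) | right _ => 0 end) -
   (match Rlt_dec 0 (Rabs (v - 1)) with
   | left _ => Rpower (Rabs (v - 1)) (1 / 3) | right _ => 0 end))) at 1.
  reflexivity. rewrite <- Rabs_Ropp. f_equal. ring.
Qed.

Lemma Atil_even (v : R) : Atil (- v) = Atil v.
Proof.
  unfold Atil. rewrite Rabs_Ropp.
  replace (-v+1) with (-(v-1)) by ring. replace (-v-1) with (-(v+1)) by ring.
  rewrite !Rabs_Ropp. f_equal. rewrite <- Rabs_Ropp. f_equal. ring.
Qed.

Lemma Atil_large (v : R) : 1 <= v -> Atil v = 2 * v.
Proof.
  intro h. unfold Atil. rewrite (Rabs_right v) by lra.
  rewrite (Rabs_right (v+1)) by lra. rewrite (Rabs_right (v-1)) by lra.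
  replace (v + 1 - (v - 1)) with 2 by ring. rewrite Rabs_right by lra. ring.
Qed.

Lemma Bfun_nonneg v : 0 <= Bfun v.
Proof. unfold Bfun. apply Rmult_le_pos. apply Rmult_le_pos. lra. apply Rabs_pos.
  apply pow_le. apply Rabs_pos. Qed.

Lemma alg_est (a b v : R) : a^3 = v+1 -> b^3 = v-1 -> 1 <= b -> b <= a ->
  Rabs (27/8 * v * (a-b)^3 * v - 1) <= 3 / v^2.
Proof.
  intros ha hb hb1 hab.
  remember (a - b) as d eqn:ed. remember (a*a + a*b + b*b) as Q eqn:eQ.
  remember (a + b) as p eqn:ep.
  assert (hdQ : d * Q = 2) by (subst; nra).
  assert (hQ3 : 3 <= Q) by (subst; nra).
  assert (hd : 0 <= d) by (subst; lra).
  assert (hdle : d <= 2/3). { apply Rmult_le_reg_r with Q. lra. rewrite hdQ.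
     unfold Rdiv. nra. }
  assert (hp2 : p*p <= 4/3 * Q) by (subst; nra).
  assert (hpd : p*p*(d*d) <= 16/9).
  { assert (p*p*(d*d) <= 4/3*Q*(d*d)) by (apply Rmult_le_compat_r; nra).
    assert (4/3*Q*(d*d) = 8/3 * d) by (transitivity (4/3*(d*Q)*d); [ring|rewrite hdQ; lra]).
    nra. }
  assert (hp4 : p*p*p*p*(d*d) <= 64/9).
  { assert (p*p*(p*p*(d*d)) <= 4/3 * Q * (8/3*d)).
    { apply Rmult_le_compat. nra. nra. auto.
      assert (p*p*(d*d) <= 4/3*Q*(d*d)) by (apply Rmult_le_compat_r; nra).
      assert (4/3*Q*(d*d) = 8/3 * d) by (transitivity (4/3*(d*Q)*d); [ring|rewrite hdQ; lra]). lra. }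
    assert (4/3 * Q * (8/3*d) = 64/9) by (transitivity (32/9*(d*Q)); [field|rewrite hdQ; lra]).
    nra. }
  assert (hid : 64 * (Q^3 - 27 * v^2) = -135*(p*p*p*p*(d*d)) - 234*(p*p*(d*d))*(d*d) + d^6).
  { assert (v = (a^3+b^3)/2) by lra. subst v. subst. field. }
  assert (hdiff : Rabs (Q^3 - 27*v^2) <= 18).
  { assert (0 <= p*p*(d*d)) by nra. assert (d^6 <= 1).
    { assert (d^6 <= (2/3)^6) by (apply pow_incr; lra). lra. }
    assert (0 <= d^6) by (apply pow_le; lra).
    assert (d*d <= 4/9) by nra.
    apply Rabs_le. split; nra. }
  assert (hv : 2 <= v). { assert (b^3 >= 1) by nra. lra. }
  assert (hQv : 27 * v^2 / 4 <= Q^3).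
  { assert (27 * (b*b)^3 <= Q^3). {
      assert (3*(b*b) <= Q) by (subst; nra).
      assert ((3*(b*b))^3 <= Q^3) by (apply pow_incr; split; nra). replace (27 * (b*b)^3) with ((3*(b*b))^3) by ring. auto. }
    assert ((b*b)^3 = (v-1)^2) by (rewrite <- hb; ring). nra. }
  assert (hQpos : 0 < Q^3) by nra.
  assert (e : 27/8 * v * d^3 * v - 1 = (27*v^2 - Q^3)/Q^3).
  { assert (d = 2/Q) by (field_simplify_eq; lra; lra).
    rewrite H. field. lra. }
  rewrite e. unfold Rdiv. rewrite Rabs_mult. rewrite Rabs_inv.
  rewrite (Rabs_right (Q^3)) by lra.
  rewrite <- Rabs_Ropp. replace (- (27 * v ^ 2 - Q ^ 3)) with (Q^3 - 27*v^2) by ring.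
  apply Rle_trans with (18 * / Q^3).
  apply Rmult_le_compat_r. left; apply Rinv_0_lt_compat; lra. auto.
  apply Rle_trans with (18 * / (27*v^2/4)).
  apply Rmult_le_compat_l. lra. apply Rinv_le_contravar. nra. auto.
  replace (18 * / (27*v^2/4)) with (8/3 * / v^2) by (field; nra).
  apply Rmult_le_compat_r. left; apply Rinv_0_lt_compat; nra. lra.
Qed.

Lemma Rabs_le_between a b : Rabs a <= b -> -b <= a <= b.
Proof. intro h. unfold Rabs in h. destruct (Rcase_abs a); lra. Qed.

Lemma vB_est v : 2 <= v -> Rabs (v * Bfun v - 1) <= 3/v^2.
Proof.
  intro hv. destruct (cbrt_pos_cube (v+1)) as [ha ha3]. lra.
  destruct (cbrt_pos_cube (v-1)) as [hb hb3]. lra.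
  set (a := cbrt_abs (v+1)) in *. set (b := cbrt_abs (v-1)) in *.
  assert (hb' : b*b*b = v-1) by (rewrite <- hb3; ring).
  assert (ha' : a*a*a = v+1) by (rewrite <- ha3; ring).
  assert (hb1 : 1 <= b).
  { destruct (Rle_lt_dec 1 b) as [h|h]; auto.
    assert (b*b < 1) by nra. assert (b*b*b < 1) by nra. lra. }
  assert (hab : b <= a).
  { destruct (Rle_lt_dec b a) as [h|h]; auto.
    assert (a*a < b*b) by nra. assert (a*a*a < b*b*b) by nra. lra. }
  unfold Bfun. change (cbrt_abs (v+1)) with a. change (cbrt_abs (v-1)) with b. rewrite (Rabs_right v) by lra.
  rewrite (Rabs_right (a - b)) by lra.
  replace (v * (27 / 8 * v * (a - b) ^ 3)) with (27/8*v*(a-b)^3*v) by ring.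
  apply alg_est; auto.
Qed.

Definition alpha (rc v : R) : R := - (rc/8) * sqrt (Bfun v) * Atil (v+2) * sqrt (Bfun (v+4)).
Definition gam (rc v : R) : R := rc/8 * Bfun v * (Atil (v+2) + Atil (v-2)).

Lemma gam_est rc v : 0 < rc -> 3 <= v -> Rabs (gam rc v - rc/2) <= 2*rc/v^2.
Proof.
  intros hrc hv. unfold gam. rewrite !Atil_large by lra.
  replace (rc / 8 * Bfun v * (2 * (v + 2) + 2 * (v - 2)) - rc / 2) with
    (rc/2 * (v * Bfun v - 1)) by field.
  rewrite Rabs_mult, (Rabs_right (rc/2)) by lra.
  pose proof (vB_est v ltac:(lra)).
  apply Rle_trans with (rc/2 * (3/v^2)). apply Rmult_le_compat_l; lra.
  unfold Rdiv. assert (0 < / v^2) by (apply Rinv_0_lt_compat; nra). nra.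
Qed.

Lemma sqrt_near1 x : 0 <= x -> Rabs (sqrt x - 1) <= Rabs (x - 1).
Proof.
  intro hx. pose proof (sqrt_pos x). pose proof (sqrt_sqrt x hx).
  replace (x - 1) with ((sqrt x - 1) * (sqrt x + 1)) by nra.
  rewrite Rabs_mult. rewrite (Rabs_right (sqrt x + 1)) by lra.
  pose proof (Rabs_pos (sqrt x - 1)). nra.
Qed.

Lemma alpha_est rc v : 0 < rc -> 8 <= v -> Rabs (alpha rc v + rc/4) <= 3*rc/v^2.
Proof.
  intros hrc hv. unfold alpha. rewrite Atil_large by lra.
  pose proof (Bfun_nonneg v). pose proof (Bfun_nonneg (v+4)).
  assert (eX : sqrt (Bfun v) * (2*(v+2)) * sqrt (Bfun (v+4)) = 2 * sqrt (Bfun v * Bfun (v+4) * (v+2)^2)).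
  { rewrite !sqrt_mult_alt by (try apply Rmult_le_pos; nra).
    rewrite sqrt_pow2 by lra. rewrite sqrt_mult_alt by lra. ring. }
  replace (- (rc / 8) * sqrt (Bfun v) * (2 * (v + 2)) * sqrt (Bfun (v + 4)) + rc / 4)
    with (- (rc/8) * (sqrt (Bfun v) * (2*(v+2)) * sqrt (Bfun (v+4))) + rc/4) by ring.
  rewrite eX.
  assert (hX0 : 0 <= Bfun v * Bfun (v+4) * (v+2)^2) by (apply Rmult_le_pos; [apply Rmult_le_pos|]; nra).
  pose proof (sqrt_near1 _ hX0) as hs.
  remember (Bfun v * Bfun (v+4) * (v+2)^2) as X eqn:eXd.
  replace (- (rc / 8) * (2 * sqrt X) + rc / 4) with (- (rc/4) * (sqrt X - 1)) by field.
  rewrite Rabs_mult, Rabs_Ropp, (Rabs_right (rc/4)) by lra.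
  assert (hX : Rabs (X - 1) <= 12 / v^2).
  { pose proof (vB_est v ltac:(lra)) as h1. pose proof (vB_est (v+4) ltac:(lra)) as h2.
    assert (eX2 : X = (v * Bfun v) * ((v+4) * Bfun (v+4)) * ((v+2)^2 / (v*(v+4)))) by (rewrite eXd; field; lra).
    remember (v * Bfun v) as x1 eqn:Ex1 in *. remember ((v+4) * Bfun (v+4)) as x2 eqn:Ex2 in *.
    assert (hr1 : 1 <= (v+2)^2 / (v*(v+4)) <= 1 + 4/v^2).
    { replace ((v+2)^2 / (v*(v+4))) with (1 + 4 / (v*(v+4))) by (field; lra).
      split. assert (0 < 4 / (v*(v+4))) by (apply Rdiv_lt_0_compat; nra). lra.
      apply Rplus_le_compat_l. apply Rmult_le_compat_l. lra. apply Rinv_le_contravar; nra. }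
    remember ((v+2)^2 / (v*(v+4))) as r eqn:Er in *.
    assert (he : 3 / v^2 <= 3/64).
    { unfold Rdiv. apply Rmult_le_compat_l. lra. apply Rinv_le_contravar. lra. nra. }
    assert (e4 : 4/v^2 = 4/3*(3/v^2)) by (field; nra).
    rewrite e4 in hr1.
    replace (12 / v^2) with (4 * (3/v^2)) by (field; nra).
    assert (0 <= 3/v^2) by (apply Rmult_le_pos; [lra|left; apply Rinv_0_lt_compat; nra]).
    assert (3/(v+4)^2 <= 3/v^2).
    { unfold Rdiv. apply Rmult_le_compat_l. lra. apply Rinv_le_contravar. nra. nra. }
    remember (3/v^2) as e eqn:Ee in *.
    apply Rabs_le_between in h1. apply Rabs_le_between in h2.
    rewrite eX2. apply Rabs_le. split.
    - assert ((1-e)*(1-e) <= x1*x2) by (apply Rmult_le_compat; lra).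
      assert (x1*x2*1 <= x1*x2*r) by (apply Rmult_le_compat_l; nra). nra.
    - assert (x1 * x2 <= (1+e)*(1+e)) by (apply Rmult_le_compat; lra).
      assert (x1*x2*r <= (1+e)*(1+e)*(1+4/3*e)) by (apply Rmult_le_compat; try lra; apply Rmult_le_pos; lra).
      nra. }
  apply Rle_trans with (rc/4 * (12/v^2)). apply Rmult_le_compat_l; lra.
  right. field. nra.
Qed.

Lemma finite_argmax (f : nat -> R) (M : nat) :
  exists k, (k <= M)%nat /\ forall n, (n <= M)%nat -> f n <= f k.
Proof.
  induction M as [|M IH].
  - exists 0%nat. split. lia. intros n hn. replace n with 0%nat by lia. lra.
  - destruct IH as [k [hk hmax]].
    destruct (Rle_lt_dec (f (S M)) (f k)) as [h|h].
    + exists k. split. lia. intros n hn. destruct (Nat.eq_dec n (S M)).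
      subst; auto. apply hmax; lia.
    + exists (S M). split. lia. intros n hn. destruct (Nat.eq_dec n (S M)).
      subst; lra. specialize (hmax n ltac:(lia)). lra.
Qed.

Lemma decay (a p p' q : nat -> R) (kap : R) :
  (forall n, 0 <= a n) -> Un_cv a 0 ->
  (forall n, (1 <= n)%nat -> q n * a n <= p n * a (S n) + p' n * a (n - 1)%nat) ->
  (forall n, (1 <= n)%nat -> 0 <= p n /\ 0 <= p' n /\
      p n * exp (- kap) + p' n * exp kap <= q n /\ p n + p' n < q n) ->
  forall n, a n <= a 0%nat * exp (- kap * INR n).
Proof.
  intros ha hcv hrec hcoef.
  set (h := fun n => a n - a 0%nat * exp (- kap * INR n)).
  assert (h0 : h 0%nat = 0). { unfold h. simpl. rewrite Rmult_0_r, exp_0. ring. }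
  assert (hstep : forall k, (1 <= k)%nat -> q k * h k <= p k * h (S k) + p' k * h (k-1)%nat).
  { intros k hk. destruct (hcoef k hk) as [hp [hp' [hq _]]]. specialize (hrec k hk).
    unfold h. rewrite S_INR. rewrite minus_INR by lia. simpl (INR 1).
    replace (- kap * (INR k + 1)) with (- kap * INR k + - kap) by ring.
    replace (- kap * (INR k - 1)) with (- kap * INR k + kap) by ring.
    rewrite !exp_plus.
    assert (0 <= a 0%nat * exp (- kap * INR k)).
    { apply Rmult_le_pos. apply ha. left; apply exp_pos. }
    remember (a 0%nat * exp (- kap * INR k)) as E.
    replace (a 0%nat * (exp (- kap * INR k) * exp (- kap))) with (E * exp (-kap)) by (subst; ring).
    replace (a 0%nat * (exp (- kap * INR k) * exp kap)) with (E * exp kap) by (subst; ring).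
    assert (E * (p k * exp (- kap) + p' k * exp kap) <= E * q k) by (apply Rmult_le_compat_l; auto).
    nra. }
  intro n. enough (h n <= 0) by (unfold h in *; lra).
  destruct (Rle_lt_dec (h n) 0) as [hn|hn]; auto. exfalso.
  destruct (hcv (h n) hn) as [N hN].
  destruct (finite_argmax h (max N n)) as [k [hk hmax]].
  assert (hall : forall m, h m <= h k).
  { intro m. destruct (le_lt_dec m (max N n)). apply hmax; auto.
    specialize (hN m ltac:(lia)). unfold R_dist in hN. rewrite Rminus_0_r in hN.
    rewrite Rabs_right in hN by (apply Rle_ge, ha).
    assert (h n <= h k) by (apply hmax; lia).
    assert (0 <= a 0%nat * exp (- kap * INR m)) by (apply Rmult_le_pos; [apply ha|left; apply exp_pos]).
    unfold h at 1. lra. }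
  assert (hkpos : 0 < h k) by (specialize (hall n); lra).
  destruct k as [|k]. lra.
  specialize (hstep (S k) ltac:(lia)). destruct (hcoef (S k) ltac:(lia)) as [hp [hp' [_ hlt]]].
  pose proof (hall (S (S k))). pose proof (hall (S k - 1)%nat).
  assert (p (S k) * h (S (S k)) <= p (S k) * h (S k)) by (apply Rmult_le_compat_l; auto).
  assert (p' (S k) * h (S k - 1)%nat <= p' (S k) * h (S k)) by (apply Rmult_le_compat_l; auto).
  nra.
Qed.

Lemma nat_above (x : R) : exists N : nat, x < INR N.
Proof.
  destruct (archimed (Rabs x)) as [h _].
  assert (0 < IZR (up (Rabs x))) by (pose proof (Rabs_pos x); lra).
  apply lt_IZR in H.
  exists (Z.to_nat (up (Rabs x))). rewrite INR_IZR_INZ, Z2Nat.id by lia.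
  pose proof (Rle_abs x). lra.
Qed.

Lemma lim_bound (U : nat -> R) l x c n :
  Un_cv U l -> (forall m, (n <= m)%nat -> Rabs (U m - x) <= c) -> Rabs (l - x) <= c.
Proof.
  intros hcv hb. destruct (Rle_lt_dec (Rabs (l - x)) c) as [h|h]; auto. exfalso.
  destruct (hcv (Rabs (l - x) - c)) as [N hN]. lra.
  specialize (hN (max N n) ltac:(lia)). specialize (hb (max N n) ltac:(lia)).
  unfold Rdist in hN.
  pose proof (Rabs_triang (l - U (max N n)) (U (max N n) - x)).
  replace (l - U (max N n) + (U (max N n) - x)) with (l - x) in H by ring.
  rewrite <- Rabs_Ropp in hN. replace (- (U (max N n) - l)) with (l - U (max N n)) in hN by ring.
  lra.
Qed.

Lemma exp_le_mono x y : x <= y -> exp x <= exp y.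
Proof. intro h. destruct (Req_dec x y). subst; lra. left; apply exp_increasing; lra. Qed.

Lemma exp_ge_1px x : 0 <= x -> 1 + x <= exp x.
Proof. intro h. destruct (Req_dec x 0). subst. rewrite exp_0. lra.
  left. apply exp_ineq1. auto. Qed.

Section Osc.
Variables (u a b : nat -> R) (th K : R).
Hypothesis hth : 0 < th < PI.
Hypothesis hK : 0 <= K.
Hypothesis hrec : forall n, (1 <= n)%nat ->
  u (S n) = 2 * cos th * u n - u (n-1)%nat + a n * u n + b n * u (n-1)%nat.
Hypothesis hab : forall n, (1 <= n)%nat ->
  Rabs (a n) + Rabs (b n) <= K * (1 / INR n - 1 / INR (S n)).

Let St := sin th.
Let e (n : nat) := a (S n) * u (S n) + b (S n) * u n.
Let ang (n : nat) := INR n * th.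
Definition Xs (n : nat) := (u n * sin (ang (S n)) - u (S n) * sin (ang n)) / St.
Definition Ys (n : nat) := (u (S n) * cos (ang n) - u n * cos (ang (S n))) / St.

Lemma St_pos : 0 < St.
Proof. unfold St. apply sin_gt_0; lra. Qed.

Lemma angS n : ang (S n) = ang n + th.
Proof. unfold ang. rewrite S_INR. ring. Qed.

Lemma sin_sum2 x y : sin (x + y) + sin (x - y) = 2 * sin x * cos y.
Proof. rewrite sin_plus, sin_minus. ring. Qed.
Lemma cos_sum2 x y : cos (x + y) + cos (x - y) = 2 * cos x * cos y.
Proof. rewrite cos_plus, cos_minus. ring. Qed.

Lemma u_repr n : u n = Xs n * cos (ang n) + Ys n * sin (ang n).
Proof.
  pose proof St_pos. unfold Xs, Ys. rewrite angS.
  transitivity (u n * (sin (ang n + th) * cos (ang n) - cos (ang n + th) * sin (ang n)) / St).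
  rewrite <- sin_minus. replace (ang n + th - ang n) with th by ring. fold St. field. lra.
  field. lra.
Qed.

Lemma u_reprS n : u (S n) = Xs n * cos (ang (S n)) + Ys n * sin (ang (S n)).
Proof.
  pose proof St_pos. unfold Xs, Ys. rewrite angS.
  transitivity (u (S n) * (sin (ang n + th) * cos (ang n) - cos (ang n + th) * sin (ang n)) / St).
  rewrite <- sin_minus. replace (ang n + th - ang n) with th by ring. fold St. field. lra.
  field. lra.
Qed.

Lemma step_X n : Xs (S n) = Xs n - e n * sin (ang (S n)) / St.
Proof.
  pose proof St_pos. unfold Xs, e. rewrite (hrec (S n)) by lia.
  replace (S n - 1)%nat with n by lia.
  rewrite (angS (S n)). rewrite (angS n).
  pose proof (sin_sum2 (ang n + th) th) as hs.
  replace (ang n + th - th) with (ang n) in hs by ring.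
  replace (sin (ang n + th + th)) with (2 * sin (ang n + th) * cos th - sin (ang n)) by lra.
  field. lra.
Qed.

Lemma step_Y n : Ys (S n) = Ys n + e n * cos (ang (S n)) / St.
Proof.
  pose proof St_pos. unfold Ys, e. rewrite (hrec (S n)) by lia.
  replace (S n - 1)%nat with n by lia.
  rewrite (angS (S n)). rewrite (angS n).
  pose proof (cos_sum2 (ang n + th) th) as hs.
  replace (ang n + th - th) with (ang n) in hs by ring.
  replace (cos (ang n + th + th)) with (2 * cos (ang n + th) * cos th - cos (ang n)) by lra.
  field. lra.
Qed.

Definition T n := Rabs (Xs n) + Rabs (Ys n).

Lemma trig_bound x y c s : Rabs c <= 1 -> Rabs s <= 1 -> Rabs (x * c + y * s) <= Rabs x + Rabs y.
Proof.
  intros hc hs. eapply Rle_trans. apply Rabs_triang. rewrite !Rabs_mult.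
  pose proof (Rabs_pos x). pose proof (Rabs_pos y).
  assert (Rabs x * Rabs c <= Rabs x) by nra. assert (Rabs y * Rabs s <= Rabs y) by nra. lra.
Qed.

Lemma abs_cos x : Rabs (cos x) <= 1.
Proof. apply Rabs_le. apply COS_bound. Qed.
Lemma abs_sin x : Rabs (sin x) <= 1.
Proof. apply Rabs_le. apply SIN_bound. Qed.

Lemma u_T n : Rabs (u n) <= T n /\ Rabs (u (S n)) <= T n.
Proof.
  split. rewrite u_repr. apply trig_bound; [apply abs_cos|apply abs_sin].
  rewrite u_reprS. apply trig_bound; [apply abs_cos|apply abs_sin].
Qed.

Definition dl (n : nat) := 1 / INR (S n) - 1 / INR (S (S n)).

Lemma dl_nonneg n : 0 <= dl n.
Proof. unfold dl. rewrite !S_INR. pose proof (pos_INR n).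
  assert (1 / (INR n + 1 + 1) <= 1 / (INR n + 1)).
  { apply Rmult_le_compat_l. lra. apply Rinv_le_contravar; lra. } lra. Qed.

Lemma e_bound n : Rabs (e n) <= K * dl n * T n.
Proof.
  destruct (u_T n) as [h1 h2]. pose proof (hab (S n) ltac:(lia)) as h.
  unfold e. eapply Rle_trans. apply Rabs_triang. rewrite !Rabs_mult.
  pose proof (Rabs_pos (a (S n))). pose proof (Rabs_pos (b (S n))).
  assert (Rabs (a (S n)) * Rabs (u (S n)) <= Rabs (a (S n)) * T n) by (apply Rmult_le_compat_l; auto).
  assert (Rabs (b (S n)) * Rabs (u n) <= Rabs (b (S n)) * T n) by (apply Rmult_le_compat_l; auto).
  assert ((Rabs (a (S n)) + Rabs (b (S n))) * T n <= K * dl n * T n).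
  { apply Rmult_le_compat_r. pose proof (Rabs_pos (u n)); lra. unfold dl. auto. }
  lra.
Qed.

Lemma X_diff n : Rabs (Xs (S n) - Xs n) <= Rabs (e n) / St.
Proof. pose proof St_pos. rewrite step_X. replace (Xs n - e n * sin (ang (S n)) / St - Xs n)
  with (- (e n * sin (ang (S n))) / St) by (field; lra).
  unfold Rdiv. rewrite Rabs_mult, Rabs_Ropp, Rabs_mult, Rabs_inv, (Rabs_right St) by lra.
  pose proof (abs_sin (ang (S n))). pose proof (Rabs_pos (e n)).
  apply Rmult_le_compat_r. left; apply Rinv_0_lt_compat; lra. nra. Qed.

Lemma Y_diff n : Rabs (Ys (S n) - Ys n) <= Rabs (e n) / St.
Proof. pose proof St_pos. rewrite step_Y. replace (Ys n + e n * cos (ang (S n)) / St - Ys n)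
  with ((e n * cos (ang (S n))) / St) by (field; lra).
  unfold Rdiv. rewrite Rabs_mult, Rabs_mult, Rabs_inv, (Rabs_right St) by lra.
  pose proof (abs_cos (ang (S n))). pose proof (Rabs_pos (e n)).
  apply Rmult_le_compat_r. left; apply Rinv_0_lt_compat; lra. nra. Qed.

Lemma T_step n : T (S n) <= T n * (1 + 2 * K / St * dl n).
Proof.
  pose proof St_pos. pose proof (X_diff n). pose proof (Y_diff n). pose proof (e_bound n).
  unfold T at 1.
  pose proof (Rabs_triang (Xs (S n) - Xs n) (Xs n)). pose proof (Rabs_triang (Ys (S n) - Ys n) (Ys n)).
  replace (Xs (S n) - Xs n + Xs n) with (Xs (S n)) in * by ring.
  replace (Ys (S n) - Ys n + Ys n) with (Ys (S n)) in * by ring.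
  assert (Rabs (e n) / St <= K * dl n * T n / St).
  { unfold Rdiv. apply Rmult_le_compat_r. left; apply Rinv_0_lt_compat; lra. auto. }
  replace (T n * (1 + 2 * K / St * dl n)) with (T n + 2 * (K * dl n * T n / St)) by (field; lra).
  unfold T in *. lra.
Qed.

Lemma T_nonneg n : 0 <= T n.
Proof. unfold T. pose proof (Rabs_pos (Xs n)). pose proof (Rabs_pos (Ys n)). lra. Qed.

Lemma T_bound_aux n : T n <= T 0%nat * exp (2 * K / St * (1 - 1 / INR (S n))).
Proof.
  pose proof St_pos.
  assert (hc : 0 <= 2 * K / St) by (apply Rmult_le_pos; [lra|left; apply Rinv_0_lt_compat; lra]).
  induction n as [|n IH].
  - simpl. replace (1 - 1/1) with 0 by field. rewrite Rmult_0_r, exp_0. lra.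
  - eapply Rle_trans. apply T_step.
    assert (1 + 2 * K / St * dl n <= exp (2 * K / St * dl n)).
    { apply exp_ge_1px. apply Rmult_le_pos; auto. apply dl_nonneg. }
    eapply Rle_trans. apply Rmult_le_compat. apply T_nonneg.
    pose proof (dl_nonneg n). nra. apply IH. apply H0.
    rewrite Rmult_assoc, <- exp_plus. right. f_equal. f_equal. unfold dl. ring.
Qed.

Definition Mb := T 0%nat * exp (2 * K / St).

Lemma T_bound n : T n <= Mb.
Proof.
  pose proof St_pos. eapply Rle_trans. apply T_bound_aux. unfold Mb.
  apply Rmult_le_compat_l. apply T_nonneg. apply exp_le_mono.
  assert (0 <= 2 * K / St) by (apply Rmult_le_pos; [lra|left; apply Rinv_0_lt_compat; lra]).
  assert (0 < 1 / INR (S n)) by (rewrite S_INR; pose proof (pos_INR n); apply Rdiv_lt_0_compat; lra).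
  nra.
Qed.

Definition Dc := K * Mb / St.

Lemma Dc_nonneg : 0 <= Dc.
Proof. pose proof St_pos. unfold Dc, Mb. apply Rmult_le_pos. apply Rmult_le_pos. lra.
  apply Rmult_le_pos. apply T_nonneg. left; apply exp_pos. left; apply Rinv_0_lt_compat; lra. Qed.

Lemma tele (W : nat -> R) (hW : forall n, Rabs (W (S n) - W n) <= Rabs (e n) / St) n d :
  Rabs (W (n + d)%nat - W n) <= Dc * (1 / INR (S n) - 1 / INR (S (n + d))).
Proof.
  pose proof St_pos.
  induction d as [|d IH].
  - rewrite Nat.add_0_r. replace (W n - W n) with 0 by ring. rewrite Rabs_R0. right; ring.
  - rewrite Nat.add_succ_r.
    pose proof (Rabs_triang (W (S (n+d)) - W (n+d)%nat) (W (n+d)%nat - W n)).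
    replace (W (S (n + d)) - W (n + d)%nat + (W (n + d)%nat - W n)) with (W (S (n+d)) - W n) in H0 by ring.
    pose proof (hW (n+d)%nat). pose proof (e_bound (n+d)). pose proof (T_bound (n+d)).
    pose proof (dl_nonneg (n+d)).
    assert (Rabs (e (n+d)%nat) / St <= Dc * dl (n+d)).
    { unfold Dc. apply Rle_trans with (K * dl (n+d) * Mb / St).
      unfold Rdiv. apply Rmult_le_compat_r. left; apply Rinv_0_lt_compat; lra.
      eapply Rle_trans. apply H2. apply Rmult_le_compat_l. apply Rmult_le_pos; auto. auto.
      right. field. lra. }
    unfold dl in H5. lra.
Qed.

Lemma close (W : nat -> R) (hW : forall n, Rabs (W (S n) - W n) <= Rabs (e n) / St) n m :
  (n <= m)%nat -> Rabs (W m - W n) <= Dc / INR (S n).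
Proof.
  intro h. replace m with (n + (m - n))%nat by lia.
  eapply Rle_trans. apply tele; auto.
  pose proof Dc_nonneg.
  assert (0 <= 1 / INR (S (n + (m - n)))) by (rewrite S_INR; pose proof (pos_INR (n + (m-n))); left; apply Rdiv_lt_0_compat; lra).
  unfold Rdiv. nra.
Qed.

Lemma cauchy (W : nat -> R) (hW : forall n, Rabs (W (S n) - W n) <= Rabs (e n) / St) :
  Cauchy_crit W.
Proof.
  intros eps heps. destruct (nat_above (2 * Dc / eps)) as [N hN].
  exists N. intros n m hn hm. unfold Rdist.
  pose proof (close W hW N n hn). pose proof (close W hW N m hm).
  pose proof (Rabs_triang (W n - W N) (W N - W m)).
  replace (W n - W N + (W N - W m)) with (W n - W m) in H1 by ring.
  rewrite <- Rabs_Ropp in H0. replace (- (W m - W N)) with (W N - W m) in H0 by ring.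
  assert (Dc / INR (S N) < eps / 2).
  { rewrite S_INR. pose proof Dc_nonneg. pose proof (pos_INR N).
    apply (Rmult_lt_reg_r (INR N + 1)). lra. unfold Rdiv.
    rewrite Rmult_assoc, Rinv_l by lra.
    assert (2 * Dc < eps * INR N).
    { apply (Rmult_lt_compat_r eps) in hN; auto. unfold Rdiv in hN.
      rewrite Rmult_assoc, Rinv_l in hN by lra. lra. }
    lra. }
  lra.
Qed.

Theorem osc_main : exists X Y C, 0 <= C /\ forall n,
  Rabs (u n - (X * cos (INR n * th) + Y * sin (INR n * th))) <= C / INR (S n).
Proof.
  destruct (R_complete Xs (cauchy Xs X_diff)) as [X hX].
  destruct (R_complete Ys (cauchy Ys Y_diff)) as [Y hY].
  exists X, Y, (2 * Dc). split. pose proof Dc_nonneg. lra. intro n.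
  assert (hx : Rabs (X - Xs n) <= Dc / INR (S n)) by (apply (lim_bound Xs X (Xs n) _ n hX); intros; apply close; auto; apply X_diff).
  assert (hy : Rabs (Y - Ys n) <= Dc / INR (S n)) by (apply (lim_bound Ys Y (Ys n) _ n hY); intros; apply close; auto; apply Y_diff).
  rewrite u_repr. fold (ang n).
  replace (Xs n * cos (ang n) + Ys n * sin (ang n) - (X * cos (ang n) + Y * sin (ang n)))
    with ((Xs n - X) * cos (ang n) + (Ys n - Y) * sin (ang n)) by ring.
  eapply Rle_trans. apply trig_bound; [apply abs_cos|apply abs_sin].
  rewrite <- (Rabs_Ropp (Xs n - X)), <- (Rabs_Ropp (Ys n - Y)).
  replace (- (Xs n - X)) with (X - Xs n) by ring. replace (- (Ys n - Y)) with (Y - Ys n) by ring.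
  unfold Rdiv in *. lra.
Qed.
End Osc.

Definition recR (rc lam : R) (x : R -> R) (v : R) : Prop :=
  alpha rc v * x (v+4) + (gam rc v - lam) * x v + alpha rc (v-4) * x (v-4) = 0.

Lemma rho2_fst rc psi v : fst (rho2 rc psi v) =
  alpha rc v * fst (psi (v+4)) + gam rc v * fst (psi v) + alpha rc (v-4) * fst (psi (v-4)).
Proof.
  unfold rho2, Dop, Cscale, Csub, alpha, gam. simpl.
  replace (v+2+2) with (v+4) by ring. replace (v+2-2) with v by ring.
  replace (v-2+2) with v by ring. replace (v-2-2) with (v-4) by ring.
  replace (v-4+2) with (v-2) by ring. replace (v-4+4) with v by ring.
  pose proof (sqrt_sqrt _ (Bfun_nonneg v)). 
  transitivity (- (rc / 8) * sqrt (Bfun v) * Atil (v + 2) * sqrt (Bfun (v + 4)) * fst (psi (v + 4)) +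
    rc / 8 * (sqrt (Bfun v) * sqrt (Bfun v)) * (Atil (v + 2) + Atil (v - 2)) * fst (psi v) +
    - (rc / 8) * sqrt (Bfun (v - 4)) * Atil (v - 2) * sqrt (Bfun v) * fst (psi (v - 4))).
  ring. rewrite H. ring.
Qed.

Lemma rho2_snd rc psi v : snd (rho2 rc psi v) =
  alpha rc v * snd (psi (v+4)) + gam rc v * snd (psi v) + alpha rc (v-4) * snd (psi (v-4)).
Proof.
  unfold rho2, Dop, Cscale, Csub, alpha, gam. simpl.
  replace (v+2+2) with (v+4) by ring. replace (v+2-2) with v by ring.
  replace (v-2+2) with v by ring. replace (v-2-2) with (v-4) by ring.
  replace (v-4+2) with (v-2) by ring. replace (v-4+4) with v by ring.
  pose proof (sqrt_sqrt _ (Bfun_nonneg v)). 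
  transitivity (- (rc / 8) * sqrt (Bfun v) * Atil (v + 2) * sqrt (Bfun (v + 4)) * snd (psi (v + 4)) +
    rc / 8 * (sqrt (Bfun v) * sqrt (Bfun v)) * (Atil (v + 2) + Atil (v - 2)) * snd (psi v) +
    - (rc / 8) * sqrt (Bfun (v - 4)) * Atil (v - 2) * sqrt (Bfun v) * snd (psi (v - 4))).
  ring. rewrite H. ring.
Qed.

Lemma eigen_fst rc eps lam psi : eigen_eq rc eps lam psi ->
  forall n, recR rc lam (fun w => fst (psi w)) (vpt eps n).
Proof.
  intros h n. specialize (h n). apply (f_equal fst) in h. rewrite rho2_fst in h.
  unfold recR. simpl in h. unfold Cscale in h. simpl in h. lra.
Qed.

Lemma eigen_snd rc eps lam psi : eigen_eq rc eps lam psi ->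
  forall n, recR rc lam (fun w => snd (psi w)) (vpt eps n).
Proof.
  intros h n. specialize (h n). apply (f_equal snd) in h. rewrite rho2_snd in h.
  unfold recR. simpl in h. unfold Cscale in h. simpl in h. lra.
Qed.

Lemma alpha_refl1 rc w : alpha rc (- w) = alpha rc (w - 4).
Proof.
  unfold alpha. replace (-w + 2) with (-(w-2)) by ring. replace (-w+4) with (-(w-4)) by ring.
  rewrite Atil_even, !Bfun_even. replace (w-4+2) with (w-2) by ring. replace (w-4+4) with w by ring. ring.
Qed.

Lemma alpha_refl2 rc w : alpha rc (- w - 4) = alpha rc w.
Proof.
  replace (-w-4) with (-(w+4)) by ring. rewrite alpha_refl1. f_equal. ring.
Qed.

Lemma gam_even rc w : gam rc (- w) = gam rc w.
Proof.
  unfold gam. rewrite Bfun_even. replace (-w+2) with (-(w-2)) by ring.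
  replace (-w-2) with (-(w+2)) by ring. rewrite !Atil_even. ring.
Qed.

Lemma recR_refl rc lam x w : recR rc lam x (- w) -> recR rc lam (fun y => x (- y)) w.
Proof.
  unfold recR. rewrite alpha_refl1, alpha_refl2, gam_even.
  replace (- (w+4)) with (-w-4) by ring. replace (-(w-4)) with (-w+4) by ring.
  intro h. lra.
Qed.

Lemma abs_div_le x y c d : 0 < d -> d <= Rabs y -> Rabs x <= c -> Rabs (x / y) <= c / d.
Proof.
  intros hd hy hx. unfold Rdiv. rewrite Rabs_mult, Rabs_inv.
  pose proof (Rabs_pos x).
  apply Rmult_le_compat; auto. left; apply Rinv_0_lt_compat; lra.
  apply Rinv_le_contravar; lra.
Qed.

Lemma coef_bounds rc lam v : 0 < rc -> 0 < lam < rc -> 16 <= v ->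
  Rabs ((lam - gam rc v) / alpha rc v - 2 * (1 - 2 * lam / rc)) +
  Rabs (1 - alpha rc (v - 4) / alpha rc v) <= 112 / (v-4)^2.
Proof.
  intros hrc hlam hv.
  pose proof (alpha_est rc v hrc ltac:(lra)) as ha.
  pose proof (alpha_est rc (v-4) hrc ltac:(lra)) as ham.
  pose proof (gam_est rc v hrc ltac:(lra)) as hg.
  assert (hvv : 3 * rc / v^2 <= 3 * rc / (v-4)^2).
  { unfold Rdiv. apply Rmult_le_compat_l. lra. apply Rinv_le_contravar; nra. }
  assert (hv2 : 2 * rc / v^2 <= 2 * rc / (v-4)^2).
  { unfold Rdiv. apply Rmult_le_compat_l. lra. apply Rinv_le_contravar; nra. }
  assert (hsmall : 3 * rc / (v-4)^2 <= rc / 16).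
  { unfold Rdiv. replace (rc * / 16) with (3 * rc * / 48) by field.
    apply Rmult_le_compat_l. lra. apply Rinv_le_contravar; nra. }
  remember (alpha rc v) as A. remember (alpha rc (v-4)) as Am. remember (gam rc v) as G.
  apply Rabs_le_between in ha. apply Rabs_le_between in ham. apply Rabs_le_between in hg.
  assert (hA : rc / 8 <= Rabs A) by (rewrite Rabs_left by lra; lra).
  assert (hA0 : A <> 0) by lra.
  replace ((lam - G) / A - 2 * (1 - 2 * lam / rc)) with
    (((rc/2 - G) - 2 * (1 - 2*lam/rc) * (A + rc/4)) / A) by (field; lra).
  replace (1 - Am / A) with ((A - Am) / A) by (field; lra).
  assert (h1 : Rabs ((rc/2 - G) - 2 * (1 - 2*lam/rc) * (A + rc/4)) <= 8 * rc / (v-4)^2).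
  { assert (hc : Rabs (2 * (1 - 2*lam/rc)) <= 2).
    { apply Rabs_le. assert (0 < lam/rc < 1). { split. apply Rdiv_lt_0_compat; lra.
        apply (Rmult_lt_reg_r rc); auto. unfold Rdiv. rewrite Rmult_assoc, Rinv_l by lra. lra. }
      unfold Rdiv in *. lra. }
    eapply Rle_trans. apply Rabs_triang. rewrite Rabs_Ropp, Rabs_mult.
    assert (Rabs (rc/2 - G) <= 2 * rc / (v-4)^2).
    { apply Rabs_le. lra. }
    assert (Rabs (A + rc/4) <= 3 * rc / (v-4)^2). { apply Rabs_le. lra. }
    pose proof (Rabs_pos (2 * (1 - 2*lam/rc))). pose proof (Rabs_pos (A + rc/4)).
    assert (Rabs (2 * (1 - 2 * lam / rc)) * Rabs (A + rc / 4) <= 2 * (3 * rc / (v - 4) ^ 2)) by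
      (apply Rmult_le_compat; try assumption; lra).
    replace (8 * rc / (v-4)^2) with (2 * rc / (v-4)^2 + 2 * (3 * rc / (v - 4) ^ 2)) by (field; nra).
    lra. }
  assert (h2 : Rabs (A - Am) <= 6 * rc / (v-4)^2).
  { apply Rabs_le. replace (6 * rc / (v-4)^2) with (2 * (3 * rc / (v - 4) ^ 2)) by (field; nra). lra. }
  pose proof (abs_div_le _ _ _ (rc/8) ltac:(lra) hA h1).
  pose proof (abs_div_le _ _ _ (rc/8) ltac:(lra) hA h2).
  assert (8 * rc / (v - 4) ^ 2 / (rc / 8) + 6 * rc / (v - 4) ^ 2 / (rc / 8) = 112 / (v-4)^2)
    by (field; nra).
  lra.
Qed.

Lemma osc_dir rc lam (x : R -> R) w0 : 0 < rc -> 0 < lam < rc -> 16 <= w0 ->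
  (forall n : nat, recR rc lam x (w0 + 4 * INR n)) ->
  exists X Y C, 0 <= C /\ forall n : nat,
    Rabs (x (w0 + 4 * INR n) - (X * cos (INR n * acos (1 - 2 * lam / rc)) +
                                Y * sin (INR n * acos (1 - 2 * lam / rc)))) <= C / INR (S n).
Proof.
  intros hrc hlam hw hrec.
  set (th := acos (1 - 2 * lam / rc)).
  assert (hl : 0 < lam / rc < 1). { split. apply Rdiv_lt_0_compat; lra.
        apply (Rmult_lt_reg_r rc); auto. unfold Rdiv. rewrite Rmult_assoc, Rinv_l by lra. lra. }
  assert (hth : 0 < th < PI). { apply acos_bound_lt. unfold Rdiv in *. lra. }
  assert (hcos : cos th = 1 - 2 * lam / rc). { apply cos_acos. unfold Rdiv in *. lra. }
  clearbody th.
  set (w := fun n : nat => w0 + 4 * INR n).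
  set (u := fun n : nat => x (w n)).
  set (a := fun n : nat => (lam - gam rc (w n)) / alpha rc (w n) - 2 * (1 - 2 * lam / rc)).
  set (b := fun n : nat => 1 - alpha rc (w n - 4) / alpha rc (w n)).
  assert (hrec' : forall n, (1 <= n)%nat ->
    u (S n) = 2 * cos th * u n - u (n-1)%nat + a n * u n + b n * u (n-1)%nat).
  { intros n hn. specialize (hrec n). unfold recR in hrec. unfold u, a, b.
    assert (ew1 : w (S n) = w n + 4) by (unfold w; rewrite S_INR; ring).
    assert (ew2 : w (n-1)%nat = w n - 4) by (unfold w; rewrite minus_INR by lia; simpl; ring).
    rewrite ew1, ew2. rewrite hcos. fold (w n) in hrec.
    pose proof (alpha_est rc (w n) hrc ltac:(unfold w; pose proof (pos_INR n); lra)).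
    apply Rabs_le_between in H.
    assert (3 * rc / w n ^2 <= rc / 16).
    { unfold Rdiv. replace (rc * / 16) with (3 * rc * / 48) by field.
      apply Rmult_le_compat_l. lra. apply Rinv_le_contravar. lra. unfold w; pose proof (pos_INR n); nra. }
    assert (alpha rc (w n) <> 0) by lra.
    assert (ex4 : x (w n + 4) = ((lam - gam rc (w n)) * x (w n) - alpha rc (w n - 4) * x (w n - 4)) / alpha rc (w n)).
    { apply (Rmult_eq_reg_l (alpha rc (w n))); auto. field_simplify; auto. lra. }
    rewrite ex4. field. split; lra. }
  assert (hab : forall n, (1 <= n)%nat ->
    Rabs (a n) + Rabs (b n) <= 112 * (1 / INR n - 1 / INR (S n))).
  { intros n hn. unfold a, b. eapply Rle_trans. apply coef_bounds; auto.
    unfold w; pose proof (pos_INR n); lra.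
    assert (1 <= INR n) by (apply (le_INR 1); lia).
    rewrite S_INR. replace (1 / INR n - 1 / (INR n + 1)) with (1 / (INR n * (INR n + 1))) by (field; lra).
    unfold Rdiv. rewrite Rmult_1_l. apply Rmult_le_compat_l. lra. apply Rinv_le_contravar. nra.
    unfold w. pose proof (pos_INR n). nra. }
  destruct (osc_main u a b th 112 hth ltac:(lra) hrec' hab) as [X [Y [C [hC hb]]]].
  exists X, Y, C. split; auto.
Qed.

Lemma Cmod_le_sum (z : Cx) : Defs.Cmod z <= Rabs (fst z) + Rabs (snd z).
Proof.
  unfold Defs.Cmod. destruct z as [x y]. cbn [fst snd].
  pose proof (Rabs_pos x). pose proof (Rabs_pos y).
  rewrite <- (sqrt_pow2 (Rabs x + Rabs y)) by lra. apply sqrt_le_1_alt.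
  rewrite <- (pow2_abs x), <- (pow2_abs y). nra.
Qed.

Definition mkap (P Q R S : R) : Cx := ((P + S)/2, (R - Q)/2).
Definition mkap' (P Q R S : R) : Cx := ((P - S)/2, (R + Q)/2).

Lemma combine (z : Cx) P Q R S kk v c1 c2 :
  Rabs (fst z - (P * cos (kk * v) + Q * sin (kk * v))) <= c1 ->
  Rabs (snd z - (R * cos (kk * v) + S * sin (kk * v))) <= c2 ->
  Defs.Cmod (Csub z (Cadd (Cmul (mkap P Q R S) (Cexpi (kk * v)))
                          (Cmul (mkap' P Q R S) (Cexpi (- kk * v))))) <= c1 + c2.
Proof.
  intros h1 h2. eapply Rle_trans. apply Cmod_le_sum.
  unfold Csub, Cadd, Cmul, mkap, mkap', Cexpi. simpl.
  replace (- kk * v) with (- (kk * v)) by ring. rewrite cos_neg, sin_neg.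
  match goal with |- Rabs ?a + Rabs ?b <= _ =>
    replace a with (fst z - (P * cos (kk * v) + Q * sin (kk * v))) by field;
    replace b with (snd z - (R * cos (kk * v) + S * sin (kk * v))) by field end.
  lra.
Qed.

Lemma shift_phase X Y t ph :
  X * cos (t - ph) + Y * sin (t - ph) =
  (X * cos ph - Y * sin ph) * cos t + (X * sin ph + Y * cos ph) * sin t.
Proof. rewrite cos_minus, sin_minus. ring. Qed.

Lemma shift_phase_neg X Y t ph :
  X * cos (- t - ph) + Y * sin (- t - ph) =
  (X * cos ph - Y * sin ph) * cos t + (- (X * sin ph + Y * cos ph)) * sin t.
Proof. rewrite cos_minus, sin_minus, cos_neg, sin_neg. ring. Qed.

Lemma vpt_pos eps (n : nat) : vpt eps (Z.of_nat (4 + n)) = (eps + 16) + 4 * INR n.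
Proof. unfold vpt. rewrite <- INR_IZR_INZ, plus_INR. simpl. ring. Qed.

Lemma vpt_neg eps (n : nat) : vpt eps (- Z.of_nat (5 + n)) = - (((4 - eps) + 16) + 4 * INR n).
Proof. unfold vpt. rewrite opp_IZR, <- INR_IZR_INZ, plus_INR. simpl. ring. Qed.

Lemma part2 rc (hrc : 0 < rc) :
  (exists k : R -> R,
     forall (eps : R), 0 < eps < 4 ->
     forall (lam : R) (psi : R -> Cx), 0 < lam < rc ->
       eigen_eq rc eps lam psi ->
       exists (ap ap' am am' : Cx) (C V0 : R), 0 < C /\
         forall n : Z,
           (V0 < vpt eps n ->
              Defs.Cmod (Csub (psi (vpt eps n))
                     (Cadd (Cmul ap (Cexpi (k lam * vpt eps n)))
                           (Cmul ap' (Cexpi (- (k lam) * vpt eps n)))))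
              <= C / Rabs (vpt eps n)) /\
           (vpt eps n < - V0 ->
              Defs.Cmod (Csub (psi (vpt eps n))
                     (Cadd (Cmul am (Cexpi (k lam * vpt eps n)))
                           (Cmul am' (Cexpi (- (k lam) * vpt eps n)))))
              <= C / Rabs (vpt eps n))).
Proof.
  exists (fun lam => acos (1 - 2 * lam / rc) / 4).
  intros eps heps lam psi hlam heig.
  set (th := acos (1 - 2 * lam / rc)).
  set (w0 := eps + 16). set (w1 := (4 - eps) + 16).
  assert (hpos : forall x, (forall n, recR rc lam x (vpt eps n)) ->
    exists X Y C, 0 <= C /\ forall n : nat,
    Rabs (x (w0 + 4 * INR n) - (X * cos (INR n * th) + Y * sin (INR n * th))) <= C / INR (S n)).
  { intros x hx. apply osc_dir; auto. unfold w0; lra.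
    intro n. unfold w0. rewrite <- vpt_pos. apply hx. }
  assert (hneg : forall x, (forall n, recR rc lam x (vpt eps n)) ->
    exists X Y C, 0 <= C /\ forall n : nat,
    Rabs (x (- (w1 + 4 * INR n)) - (X * cos (INR n * th) + Y * sin (INR n * th))) <= C / INR (S n)).
  { intros x hx. apply (osc_dir rc lam (fun y => x (- y)) w1); auto. unfold w1; lra.
    intro n. apply recR_refl. unfold w1. rewrite <- vpt_neg. apply hx. }
  destruct (hpos _ (eigen_fst _ _ _ _ heig)) as [X1 [Y1 [C1 [hC1 h1]]]].
  destruct (hpos _ (eigen_snd _ _ _ _ heig)) as [X2 [Y2 [C2 [hC2 h2]]]].
  destruct (hneg _ (eigen_fst _ _ _ _ heig)) as [X3 [Y3 [C3 [hC3 h3]]]].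
  destruct (hneg _ (eigen_snd _ _ _ _ heig)) as [X4 [Y4 [C4 [hC4 h4]]]].
  set (kk := th / 4). set (p0 := kk * w0). set (p1 := kk * w1).
  exists (mkap (X1 * cos p0 - Y1 * sin p0) (X1 * sin p0 + Y1 * cos p0)
               (X2 * cos p0 - Y2 * sin p0) (X2 * sin p0 + Y2 * cos p0)).
  exists (mkap' (X1 * cos p0 - Y1 * sin p0) (X1 * sin p0 + Y1 * cos p0)
               (X2 * cos p0 - Y2 * sin p0) (X2 * sin p0 + Y2 * cos p0)).
  exists (mkap (X3 * cos p1 - Y3 * sin p1) (- (X3 * sin p1 + Y3 * cos p1))
               (X4 * cos p1 - Y4 * sin p1) (- (X4 * sin p1 + Y4 * cos p1))).
  exists (mkap' (X3 * cos p1 - Y3 * sin p1) (- (X3 * sin p1 + Y3 * cos p1))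
               (X4 * cos p1 - Y4 * sin p1) (- (X4 * sin p1 + Y4 * cos p1))).
  exists (20 * (C1 + C2 + C3 + C4) + 1), 20.
  split. lra.
  intro m. split.
  - intro hv. assert (hm : (5 <= m)%Z).
    { unfold vpt in hv. assert (IZR m > 4) by lra. apply lt_IZR in H. lia. }
    set (n := Z.to_nat (m - 4)).
    assert (em : m = Z.of_nat (4 + n)) by (unfold n; lia).
    rewrite em. rewrite vpt_pos. fold w0.
    specialize (h1 n). specialize (h2 n).
    assert (eth : INR n * th = kk * (w0 + 4 * INR n) - p0) by (unfold p0, kk; field).
    rewrite eth, shift_phase in h1, h2.
    eapply Rle_trans. apply combine. apply h1. apply h2.
    assert (hw : 0 < w0 + 4 * INR n) by (unfold w0; pose proof (pos_INR n); lra).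
    rewrite Rabs_right by lra.
    assert (hw2 : w0 + 4 * INR n <= 20 * INR (S n)) by (rewrite S_INR; unfold w0; pose proof (pos_INR n); lra).
    assert (hS : 0 < INR (S n)) by (rewrite S_INR; pose proof (pos_INR n); lra).
    unfold Rdiv. apply Rle_trans with ((C1 + C2) * / INR (S n)). lra.
    apply Rle_trans with ((C1 + C2) * (20 * / (w0 + 4 * INR n))).
    apply Rmult_le_compat_l. lra.
    replace (20 * / (w0 + 4 * INR n)) with (/ ((w0 + 4 * INR n) / 20)) by (field; lra).
    apply Rinv_le_contravar; lra.
    assert (0 < / (w0 + 4 * INR n)) by (apply Rinv_0_lt_compat; lra). nra.
  - intro hv. assert (hm : (m <= -6)%Z).
    { unfold vpt in hv. assert (IZR m < -5) by lra. apply lt_IZR in H. lia. }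
    set (n := Z.to_nat (- m - 5)).
    assert (em : m = (- Z.of_nat (5 + n))%Z) by (unfold n; lia).
    rewrite em. rewrite vpt_neg. fold w1.
    specialize (h3 n). specialize (h4 n).
    assert (eth : INR n * th = - (kk * (- (w1 + 4 * INR n))) - p1) by (unfold p1, kk; field).
    rewrite eth, shift_phase_neg in h3, h4.
    eapply Rle_trans. apply combine. apply h3. apply h4.
    assert (hw : 0 < w1 + 4 * INR n) by (unfold w1; pose proof (pos_INR n); lra).
    rewrite Rabs_Ropp, Rabs_right by lra.
    assert (hw2 : w1 + 4 * INR n <= 20 * INR (S n)) by (rewrite S_INR; unfold w1; pose proof (pos_INR n); lra).
    assert (hS : 0 < INR (S n)) by (rewrite S_INR; pose proof (pos_INR n); lra).
    unfold Rdiv. apply Rle_trans with ((C3 + C4) * / INR (S n)). lra.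
    apply Rle_trans with ((C3 + C4) * (20 * / (w1 + 4 * INR n))).
    apply Rmult_le_compat_l. lra.
    replace (20 * / (w1 + 4 * INR n)) with (/ ((w1 + 4 * INR n) / 20)) by (field; lra).
    apply Rinv_le_contravar; lra.
    assert (0 < / (w1 + 4 * INR n)) by (apply Rinv_0_lt_compat; lra). nra.
Qed.

Definition dlt (rc lam : R) := (lam/rc - 1) / (lam/rc + 1)^2.
Definition Vb (rc lam : R) := 8 + 12 / dlt rc lam.

Lemma decay_dir rc lam w0 (a : nat -> R) : 0 < rc -> rc < lam -> Vb rc lam + 4 <= w0 ->
  (forall n, 0 <= a n) -> Un_cv a 0 ->
  (forall n, (1 <= n)%nat -> Rabs (lam - gam rc (w0 + 4 * INR n)) * a n <=
      Rabs (alpha rc (w0 + 4 * INR n)) * a (S n) + Rabs (alpha rc (w0 + 4 * INR n - 4)) * a (n-1)%nat) ->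
  forall n, a n <= a 0%nat * exp (- ln (lam / rc) * INR n).
Proof.
  intros hrc hlam hw ha hcv hrec.
  set (x := lam / rc).
  assert (hx : 1 < x). { unfold x. apply (Rmult_lt_reg_r rc); auto. unfold Rdiv.
    rewrite Rmult_assoc, Rinv_l by lra. lra. }
  assert (hlx : lam = rc * x) by (unfold x; field; lra).
  set (d := dlt rc lam). assert (ed : d = (x - 1) / (x+1)^2) by reflexivity.
  assert (hd : 0 < d) by (rewrite ed; apply Rdiv_lt_0_compat; nra).
  assert (hV : 8 + 12 / d + 4 <= w0) by exact hw.
  clearbody d. clearbody x.
  apply (decay a (fun n => Rabs (alpha rc (w0 + 4 * INR n)))
                 (fun n => Rabs (alpha rc (w0 + 4 * INR n - 4)))
                 (fun n => lam - gam rc (w0 + 4 * INR n))); auto.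
  - intros n hn. eapply Rle_trans; [|apply hrec; auto].
    apply Rmult_le_compat_r. auto. apply Rle_abs.
  - intros n hn.
    assert (hv : forall v, 8 + 12 / d <= v -> 12 / v^2 <= d).
    { intros v hv. assert (12 / d > 0) by (apply Rdiv_lt_0_compat; lra).
      assert (12 / d <= v^2) by nra.
      apply Rle_trans with (12 / (12 / d)). unfold Rdiv.
      apply Rmult_le_compat_l. lra. apply Rinv_le_contravar. unfold Rdiv in H; lra. unfold Rdiv in H0; lra.
      right. field. lra. }
    set (v := w0 + 4 * INR n).
    assert (hv1 : 8 + 12 / d + 4 <= v) by (unfold v; pose proof (pos_INR n); lra).
    assert (0 < 12/d) by (apply Rdiv_lt_0_compat; lra).
    pose proof (alpha_est rc v hrc ltac:(assert (0 < 12/d) by (apply Rdiv_lt_0_compat; lra); lra)) as h1.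
    pose proof (alpha_est rc (v-4) hrc ltac:(assert (0 < 12/d) by (apply Rdiv_lt_0_compat; lra); lra)) as h2.
    pose proof (gam_est rc v hrc ltac:(assert (0 < 12/d) by (apply Rdiv_lt_0_compat; lra); lra)) as h3.
    pose proof (hv v ltac:(lra)) as e1. pose proof (hv (v-4) ltac:(lra)) as e2.
    assert (b1 : 3 * rc / v^2 <= rc / 4 * d).
    { replace (3 * rc / v^2) with (rc / 4 * (12 / v^2)) by (field; nra).
      apply Rmult_le_compat_l; lra. }
    assert (b2 : 3 * rc / (v-4)^2 <= rc / 4 * d).
    { replace (3 * rc / (v-4)^2) with (rc / 4 * (12 / (v-4)^2)) by (field; nra).
      apply Rmult_le_compat_l; lra. }
    assert (b3 : 2 * rc / v^2 <= rc / 2 * d).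
    { replace (2 * rc / v^2) with (rc / 2 * (4 / v^2)) by (field; nra).
      apply Rmult_le_compat_l. lra.
      assert (4 / v^2 <= 12 / v^2). { unfold Rdiv. apply Rmult_le_compat_r.
        left; apply Rinv_0_lt_compat; nra. lra. } lra. }
    apply Rabs_le_between in h1. apply Rabs_le_between in h2. apply Rabs_le_between in h3.
    remember (alpha rc v) as A. remember (alpha rc (v-4)) as Am. remember (gam rc v) as G.
    set (P := rc / 4 * (1 + d)).
    assert (hA : Rabs A <= P) by (unfold P; apply Rabs_le; lra).
    assert (hAm : Rabs Am <= P) by (unfold P; apply Rabs_le; lra).
    assert (hG : G <= 2 * P) by (unfold P; lra).
    assert (eE : exp (ln x) = x) by (apply exp_ln; lra).
    assert (eE' : exp (- ln x) = / x) by (rewrite exp_Ropp, eE; auto).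
    rewrite eE, eE'.
    pose proof (Rabs_pos A). pose proof (Rabs_pos Am).
    assert (hkey : P * (/ x + x) + 2 * P <= lam).
    { assert (hd2 : d * (x+1)^2 = x - 1) by (rewrite ed; field; lra).
      assert (e : P * (/x + x) + 2*P = rc/4 * ((x+1)^2 + d*(x+1)^2) / x) by (unfold P; field; lra).
      rewrite e, hd2, hlx. apply (Rmult_le_reg_r x). lra. unfold Rdiv.
      rewrite Rmult_assoc, Rinv_l by lra. nra. }
    assert (hkey2 : 4 * P < lam).
    { unfold P. rewrite hlx. rewrite ed.
      assert ((x - 1) / (x + 1) ^ 2 < x - 1).
      { apply (Rmult_lt_reg_r ((x+1)^2)). nra. unfold Rdiv. rewrite Rmult_assoc, Rinv_l by nra. nra. }
      nra. }
    assert (/ x > 0) by (apply Rinv_0_lt_compat; lra).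
    repeat split; auto.
    + assert (Rabs A * / x <= P * / x) by (apply Rmult_le_compat_r; lra).
      assert (Rabs Am * x <= P * x) by (apply Rmult_le_compat_r; lra).
      nra.
    + lra.
Qed.

Lemma Cmod_scale r (z : Cx) : Defs.Cmod (Cscale r z) = Rabs r * Defs.Cmod z.
Proof.
  unfold Defs.Cmod, Cscale. destruct z as [x y]. cbn [fst snd].
  replace ((r*x)^2 + (r*y)^2) with (r^2 * (x^2+y^2)) by ring.
  rewrite sqrt_mult_alt by nra. rewrite <- (sqrt_pow2 (Rabs r)) by apply Rabs_pos.
  rewrite pow2_abs. auto.
Qed.

Lemma Cmod_tri (z w : Cx) : Defs.Cmod (Cadd z w) <= Defs.Cmod z + Defs.Cmod w.
Proof.
  exact (Complex.Cmod_triangle z w).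
Qed.

Lemma Cmod_comb (z z1 z2 : Cx) r r1 r2 :
  r * fst z = r1 * fst z1 + r2 * fst z2 -> r * snd z = r1 * snd z1 + r2 * snd z2 ->
  Rabs r * Defs.Cmod z <= Rabs r1 * Defs.Cmod z1 + Rabs r2 * Defs.Cmod z2.
Proof.
  intros h1 h2. rewrite <- !Cmod_scale.
  assert (Cscale r z = Cadd (Cscale r1 z1) (Cscale r2 z2)).
  { unfold Cscale, Cadd. cbn [fst snd]. rewrite h1, h2. auto. }
  rewrite H. apply Cmod_tri.
Qed.

Section L2.
Variables (eps : R) (psi : R -> Cx).
Let t (m : Z) := Defs.Cmod (psi (vpt eps m)).
Let g (m : Z) := t m ^ 2.
Definition Sseq (N : nat) := sum_f_R0 (fun j => Defs.Cmod (psi (vpt eps (Z.of_nat j - Z.of_nat N)%Z)) ^ 2) (2 * N).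

Lemma Sseq_step N : Sseq (S N) = Sseq N + g (Z.of_nat (S N)) + g (- Z.of_nat (S N))%Z.
Proof.
  unfold Sseq. replace (2 * S N)%nat with (S (S (2 * N))) by lia.
  change (sum_f_R0 ?f (S ?n)) with (sum_f_R0 f n + f (S n)).
  rewrite decomp_sum by lia. simpl Init.Nat.pred.
  rewrite (sum_eq (fun i => Defs.Cmod (psi (vpt eps (Z.of_nat (S i) - Z.of_nat (S N))%Z)) ^ 2)
    (fun j => Defs.Cmod (psi (vpt eps (Z.of_nat j - Z.of_nat N)%Z)) ^ 2)).
  2: { intros i _. do 4 f_equal. lia. }
  unfold g, t. replace (Z.of_nat 0 - Z.of_nat (S N))%Z with (- Z.of_nat (S N))%Z by lia.
  replace (Z.of_nat (S (S (2 * N))) - Z.of_nat (S N))%Z with (Z.of_nat (S N)) by lia.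
  replace (N + (N + 0))%nat with (2*N)%nat by lia. ring.
Qed.

Lemma g_nonneg m : 0 <= g m.
Proof. unfold g. apply pow2_ge_0. Qed.

Lemma tails_zero : in_l2 eps psi -> forall e, 0 < e -> exists N : nat, forall k : nat,
  (N <= k)%nat -> t (Z.of_nat k) < e /\ t (- Z.of_nat k)%Z < e.
Proof.
  intros [Mb hMb] e he.
  assert (hg : Un_growing Sseq). { intro n. rewrite Sseq_step. pose proof (g_nonneg (Z.of_nat (S n))).
    pose proof (g_nonneg (- Z.of_nat (S n))%Z). lra. }
  assert (hub : has_ub Sseq). { exists Mb. intros x [i ->]. apply hMb. }
  destruct (growing_cv Sseq hg hub) as [l hl].
  destruct (hl (e^2 / 2)) as [N hN]. assert (0 < e^2) by nra. lra.
  exists (S N). intros k hk. destruct k as [|k]. lia.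
  pose proof (hN k ltac:(lia)). pose proof (hN (S k) ltac:(lia)).
  unfold Rdist in *. apply Rabs_def2 in H. apply Rabs_def2 in H0.
  rewrite Sseq_step in H0.
  pose proof (g_nonneg (Z.of_nat (S k))). pose proof (g_nonneg (- Z.of_nat (S k))%Z).
  assert (g (Z.of_nat (S k)) < e^2) by lra. assert (g (- Z.of_nat (S k))%Z < e^2) by lra.
  unfold g in *. assert (0 <= t (Z.of_nat (S k))) by (unfold t, Defs.Cmod; apply sqrt_pos).
  assert (0 <= t (- Z.of_nat (S k))%Z) by (unfold t, Defs.Cmod; apply sqrt_pos).
  split; nra.
Qed.
End L2.

Lemma finite_bound (f : Z -> R) (M : nat) :
  exists B, 0 <= B /\ forall m, (Z.abs m <= Z.of_nat M)%Z -> f m <= B.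
Proof.
  induction M as [|M [B [hB hf]]].
  - exists (Rmax 0 (f 0%Z)). split. apply Rmax_l. intros m hm.
    replace m with 0%Z by lia. apply Rmax_r.
  - exists (Rmax B (Rmax (f (Z.of_nat (S M))) (f (- Z.of_nat (S M))%Z))).
    split. eapply Rle_trans; [apply hB|apply Rmax_l].
    intros m hm. destruct (Z_le_gt_dec (Z.abs m) (Z.of_nat M)).
    + eapply Rle_trans; [apply hf; auto|apply Rmax_l].
    + eapply Rle_trans; [|apply Rmax_r].
      destruct (Z_le_gt_dec 0 m).
      * replace m with (Z.of_nat (S M)) by lia. apply Rmax_l.
      * replace m with (- Z.of_nat (S M))%Z by lia. apply Rmax_r.
Qed.

Lemma vpt_succ eps m : vpt eps (m + 1) = vpt eps m + 4.
Proof. unfold vpt. rewrite plus_IZR. ring. Qed.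
Lemma vpt_pred eps m : vpt eps (m - 1) = vpt eps m - 4.
Proof. unfold vpt. rewrite minus_IZR. ring. Qed.

Lemma part1 rc (hrc : 0 < rc) :
  (exists kappa : R -> R,
     (forall lam, rc < lam -> 0 < kappa lam) /\
     (forall l1 l2, rc < l1 -> l1 < l2 -> kappa l1 < kappa l2) /\
     (forall (eps : R), 0 < eps < 4 ->
      forall (lam : R) (psi : R -> Cx), rc < lam ->
        in_l2 eps psi -> nonzero_on eps psi -> eigen_eq rc eps lam psi ->
        exists C : R, 0 < C /\
          forall n : Z,
            Defs.Cmod (psi (vpt eps n)) <= C * exp (- kappa lam * Rabs (vpt eps n)))).
Proof.
  assert (hlnpos : forall lam, rc < lam -> 0 < ln (lam / rc)).
  { intros lam h. rewrite <- ln_1. apply ln_increasing. lra.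
    apply (Rmult_lt_reg_r rc); auto. unfold Rdiv. rewrite Rmult_assoc, Rinv_l by lra. lra. }
  exists (fun lam => ln (lam / rc) / 4). split; [|split].
  - intros lam h. pose proof (hlnpos lam h). lra.
  - intros l1 l2 h1 h2. assert (ln (l1/rc) < ln (l2/rc)).
    { apply ln_increasing. apply Rdiv_lt_0_compat; lra.
      unfold Rdiv. apply Rmult_lt_compat_r. apply Rinv_0_lt_compat; lra. lra. }
    lra.
  - intros eps heps lam psi hlam hl2 _ heig. cbv beta.
    pose proof (hlnpos lam hlam) as hk. set (k := ln (lam / rc)) in *.
    set (t := fun m => Defs.Cmod (psi (vpt eps m))).
    assert (hrp : forall m, Rabs (lam - gam rc (vpt eps m)) * t m <=
       Rabs (alpha rc (vpt eps m)) * t (m+1)%Z + Rabs (alpha rc (vpt eps m - 4)) * t (m-1)%Z).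
    { intro m. unfold t. rewrite vpt_succ, vpt_pred. apply Cmod_comb.
      - pose proof (eigen_fst _ _ _ _ heig m) as h. unfold recR in h. lra.
      - pose proof (eigen_snd _ _ _ _ heig m) as h. unfold recR in h. lra. }
    assert (hrn : forall m, Rabs (lam - gam rc (- vpt eps m)) * t m <=
       Rabs (alpha rc (- vpt eps m)) * t (m-1)%Z + Rabs (alpha rc (- vpt eps m - 4)) * t (m+1)%Z).
    { intro m. rewrite gam_even, alpha_refl1, alpha_refl2. specialize (hrp m). lra. }
    destruct (nat_above ((Vb rc lam + 8) / 4)) as [M hM].
    assert (hVb : 0 < Vb rc lam).
    { unfold Vb, dlt. assert (1 < lam / rc).
      { apply (Rmult_lt_reg_r rc); auto. unfold Rdiv. rewrite Rmult_assoc, Rinv_l by lra. lra. }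
      assert (0 < (lam / rc - 1) / (lam / rc + 1) ^ 2) by (apply Rdiv_lt_0_compat; nra).
      assert (0 < 12 / ((lam / rc - 1) / (lam / rc + 1) ^ 2)) by (apply Rdiv_lt_0_compat; lra). lra. }
    assert (tnn : forall m, 0 <= t m) by (intro m; unfold t, Defs.Cmod; apply sqrt_pos).
    assert (hpos : forall n : nat, t (Z.of_nat (M+n)) <= t (Z.of_nat M) * exp (- k * INR n)).
    { intro n. pose proof (decay_dir rc lam (vpt eps (Z.of_nat M)) (fun n => t (Z.of_nat (M+n))) hrc hlam) as H.
      cbv beta in H. rewrite Nat.add_0_r in H. apply H; clear H.
      - unfold vpt. rewrite <- INR_IZR_INZ. lra.
      - intro; apply tnn.
      - intros e he. destruct (tails_zero eps psi hl2 e he) as [N hN]. exists N. intros j hj.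
        unfold Rdist. rewrite Rminus_0_r, Rabs_right by (apply Rle_ge, tnn). apply (hN (M+j)%nat). lia.
      - intros j hj. pose proof (hrp (Z.of_nat (M+j))) as h.
        replace (vpt eps (Z.of_nat (M + j))) with (vpt eps (Z.of_nat M) + 4 * INR j) in h
          by (unfold vpt; rewrite <- !INR_IZR_INZ, plus_INR; ring).
        replace (Z.of_nat (M + j) + 1)%Z with (Z.of_nat (M + S j)) in h by lia.
        replace (Z.of_nat (M + j) - 1)%Z with (Z.of_nat (M + (j - 1))) in h by lia.
        exact h. }
    assert (hneg : forall n : nat, t (- Z.of_nat (M+n))%Z <= t (- Z.of_nat M)%Z * exp (- k * INR n)).
    { intro n. pose proof (decay_dir rc lam (4 * INR M - eps) (fun n => t (- Z.of_nat (M+n))%Z) hrc hlam) as H.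
      cbv beta in H. rewrite Nat.add_0_r in H. apply H; clear H.
      - lra.
      - intro; apply tnn.
      - intros e he. destruct (tails_zero eps psi hl2 e he) as [N hN]. exists N. intros j hj.
        unfold Rdist. rewrite Rminus_0_r, Rabs_right by (apply Rle_ge, tnn). apply (hN (M+j)%nat). lia.
      - intros j hj. pose proof (hrn (- Z.of_nat (M+j))%Z) as h.
        replace (- vpt eps (- Z.of_nat (M + j))) with (4 * INR M - eps + 4 * INR j) in h
          by (unfold vpt; rewrite opp_IZR, <- !INR_IZR_INZ, plus_INR; ring).
        replace (- Z.of_nat (M + j) - 1)%Z with (- Z.of_nat (M + S j))%Z in h by lia.
        replace (- Z.of_nat (M + j) + 1)%Z with (- Z.of_nat (M + (j - 1)))%Z in h by lia.
        lra. }
    destruct (finite_bound t M) as [B [hB hBf]].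
    assert (hU : forall m, t m <= B * exp (- k * (Rabs (IZR m) - INR M))).
    { intro m. destruct (Z_le_gt_dec (Z.abs m) (Z.of_nat M)) as [h|h].
      - assert (1 <= exp (- k * (Rabs (IZR m) - INR M))).
        { rewrite <- exp_0. apply exp_le_mono. rewrite Rabs_Zabs.
          apply IZR_le in h. rewrite <- INR_IZR_INZ in h. nra. }
        pose proof (hBf m h). nra.
      - destruct (Z_le_gt_dec 0 m).
        + set (n := Z.to_nat (m - Z.of_nat M)).
          assert (em : m = Z.of_nat (M + n)) by (unfold n; lia).
          assert (er : Rabs (IZR m) - INR M = INR n).
          { rewrite em, <- INR_IZR_INZ, Rabs_right, plus_INR by (apply Rle_ge, pos_INR). ring. }
          rewrite er, em. eapply Rle_trans. apply hpos.
          apply Rmult_le_compat_r. left; apply exp_pos. apply hBf. lia.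
        + set (n := Z.to_nat (- m - Z.of_nat M)).
          assert (em : m = (- Z.of_nat (M + n))%Z) by (unfold n; lia).
          assert (er : Rabs (IZR m) - INR M = INR n).
          { rewrite em, opp_IZR, Rabs_Ropp, <- INR_IZR_INZ, Rabs_right, plus_INR by (apply Rle_ge, pos_INR). ring. }
          rewrite er, em. eapply Rle_trans. apply hneg.
          apply Rmult_le_compat_r. left; apply exp_pos. apply hBf. lia. }
    exists (B * exp (k * (INR M + 2)) + 1). split.
    { assert (0 <= B * exp (k * (INR M + 2))) by (apply Rmult_le_pos; [lra|left; apply exp_pos]). lra. }
    intro m. fold (t m). eapply Rle_trans. apply hU.
    assert (hv : Rabs (vpt eps m) <= 4 * Rabs (IZR m) + 4).
    { unfold vpt. eapply Rle_trans. apply Rabs_triang. rewrite Rabs_mult, (Rabs_right 4) by lra.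
      rewrite Rabs_right by lra. lra. }
    assert (exp (- k * (Rabs (IZR m) - INR M)) <= exp (k * (INR M + 2)) * exp (- (k / 4) * Rabs (vpt eps m))).
    { rewrite <- exp_plus. apply exp_le_mono. nra. }
    assert (0 <= exp (- (k / 4) * Rabs (vpt eps m))) by (left; apply exp_pos).
    assert (B * exp (- k * (Rabs (IZR m) - INR M)) <= B * (exp (k * (INR M + 2)) * exp (- (k / 4) * Rabs (vpt eps m)))) by (apply Rmult_le_compat_l; lra).
    replace (- (k / 4) * Rabs (vpt eps m)) with (- (k/4) * Rabs (vpt eps m)) by ring.
    nra.
Qed.

Theorem mainTheorem5 (rc : R) (hrc : 0 < rc) :
  (* lambda > rho_c : normalizable eigenvectors decay exponentially, with a
     rate kappa(lambda) > 0 depending only on lambda and increasing in it *)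
  (exists kappa : R -> R,
     (forall lam, rc < lam -> 0 < kappa lam) /\
     (forall l1 l2, rc < l1 -> l1 < l2 -> kappa l1 < kappa l2) /\
     (forall (eps : R), 0 < eps < 4 ->
      forall (lam : R) (psi : R -> Cx), rc < lam ->
        in_l2 eps psi -> nonzero_on eps psi -> eigen_eq rc eps lam psi ->
        exists C : R, 0 < C /\
          forall n : Z,
            Cmod (psi (vpt eps n)) <= C * exp (- kappa lam * Rabs (vpt eps n))))
  /\
  (* 0 < lambda < rho_c : every solution is asymptotically
     alpha e^{ikv} + alpha' e^{-ikv} + O(1/|v|), k determined by lambda *)
  (exists k : R -> R,
     forall (eps : R), 0 < eps < 4 ->
     forall (lam : R) (psi : R -> Cx), 0 < lam < rc ->
       eigen_eq rc eps lam psi ->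
       exists (ap ap' am am' : Cx) (C V0 : R), 0 < C /\
         forall n : Z,
           (V0 < vpt eps n ->
              Cmod (Csub (psi (vpt eps n))
                     (Cadd (Cmul ap (Cexpi (k lam * vpt eps n)))
                           (Cmul ap' (Cexpi (- (k lam) * vpt eps n)))))
              <= C / Rabs (vpt eps n)) /\
           (vpt eps n < - V0 ->
              Cmod (Csub (psi (vpt eps n))
                     (Cadd (Cmul am (Cexpi (k lam * vpt eps n)))
                           (Cmul am' (Cexpi (- (k lam) * vpt eps n)))))
              <= C / Rabs (vpt eps n))).
Proof.
  split; [apply part1 | apply part2]; auto.
Qed.
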